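(* Let $Y$ be a finite-dimensional real Hilbert space, $J:Y\to\mathbb{R}$ a $C^1$ function with locally Lipschitzian derivative, and $\varphi:Y\to[0,+\infty[$ a $C^1$ convex function whose derivative is locally Lipschitzian at $0$, with $\varphi^{-1}(0)=\{0\}$. Then, for each $x_0\in Y$ for which $J'(x_0)\neq 0$, there exists $\delta>0$ such that, for each $r\in\,]0,\delta[$, the restriction of $J$ to $B(x_0,r)$ has a unique global minimum $u_r$, and it satisfies $$J(u_r)\leq J(x)-\varphi(x-u_r)$$ for all $x\in B(x_0,r)$, where $B(x_0,r)=\{x\in Y:\|x-x_0\|\leq r\}$. *)

(* Defs.v *)
From HB Require Import structures.
From mathcomp Require Import all_boot all_order all_algebra.
From mathcomp Require Import all_classical all_reals all_analysis.
Set Implicit Arguments. Unset Strict Implicit. Unset Printing Implicit Defensive.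
Import Order.TTheory GRing.Theory Num.Theory.
Import numFieldNormedType.Exports.
Local Open Scope ring_scope.
Local Open Scope classical_set_scope.

(* The finite-dimensional real Hilbert space Y is modelled as R^n = 'rV[R]_n
   with the Euclidean inner product <u,v> = \sum_i u_i v_i. *)

Definition enorm (R : realType) (n : nat) (v : 'rV[R]_n) : R :=
  Num.sqrt (\sum_(i < n) (v ord0 i) ^+ 2).

Definition eball (R : realType) (n : nat) (x0 : 'rV[R]_n) (r : R) : set 'rV[R]_n :=
  [set x | enorm (x - x0) <= r].

(* The derivative J'(x) identified (Riesz) with the gradient vector. *)
Definition grad (R : realType) (n : nat) (f : 'rV[R]_n -> R) (x : 'rV[R]_n)
  : 'rV[R]_n := \row_(i < n) ('d f x (delta_mx ord0 i)).

Definition lipschitz_near (R : realType) (n : nat) (g : 'rV[R]_n -> 'rV[R]_n)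
  (x : 'rV[R]_n) : Prop :=
  exists L : R, exists2 e : R, 0 < e &
    forall y z, enorm (y - x) <= e -> enorm (z - x) <= e ->
      enorm (g y - g z) <= L * enorm (y - z).

Definition locally_lipschitz (R : realType) (n : nat) (g : 'rV[R]_n -> 'rV[R]_n)
  : Prop := forall x, lipschitz_near g x.

Definition C1 (R : realType) (n : nat) (f : 'rV[R]_n -> R) : Prop :=
  (forall x, differentiable f x) /\ continuous (grad f).

Definition convex_fun (R : realType) (n : nat) (f : 'rV[R]_n -> R) : Prop :=
  forall x y (t : R), 0 <= t -> t <= 1 ->
    f (t *: x + (1 - t) *: y) <= t * f x + (1 - t) * f y.

(* Main.v *)
Require Import Defs.
From HB Require Import structures.
From mathcomp Require Import all_boot all_order all_algebra.
From mathcomp Require Import all_classical all_reals all_analysis.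
From mathcomp Require Import ring lra.
Import Order.TTheory GRing.Theory Num.Theory.
Import numFieldNormedType.Exports.
Local Open Scope ring_scope.
Local Open Scope classical_set_scope.
Set Implicit Arguments. Unset Strict Implicit. Unset Printing Implicit Defensive.


Section Eucl.
Variables (R : realType) (n : nat).
Implicit Types (u v w : 'rV[R]_n) (a b : R).

Definition dot u v : R := \sum_(i < n) u ord0 i * v ord0 i.

Lemma dotC u v : dot u v = dot v u.
Proof. by apply: eq_bigr => i _; rewrite mulrC. Qed.

Lemma dotDr u v w : dot u (v + w) = dot u v + dot u w.
Proof. by rewrite /dot -big_split; apply: eq_bigr => i _; rewrite mxE mulrDr. Qed.

Lemma dotZr u a v : dot u (a *: v) = a * dot u v.
Proof. by rewrite /dot mulr_sumr; apply: eq_bigr => i _; rewrite mxE mulrCA. Qed.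

Lemma dotNr u v : dot u (- v) = - dot u v.
Proof. by rewrite -scaleN1r dotZr mulN1r. Qed.

Lemma dotBr u v w : dot u (v - w) = dot u v - dot u w.
Proof. by rewrite dotDr dotNr. Qed.

Lemma dotDl u v w : dot (v + w) u = dot v u + dot w u.
Proof. by rewrite dotC dotDr !(dotC u). Qed.

Lemma dotZl u a v : dot (a *: v) u = a * dot v u.
Proof. by rewrite dotC dotZr dotC. Qed.

Lemma dotNl u v : dot (- v) u = - dot v u.
Proof. by rewrite dotC dotNr dotC. Qed.

Lemma dotBl u v w : dot (v - w) u = dot v u - dot w u.
Proof. by rewrite dotDl dotNl. Qed.

Lemma dot0r u : dot u 0 = 0.
Proof. by rewrite /dot big1 // => i _; rewrite mxE mulr0. Qed.

Lemma dot_ge0 v : 0 <= dot v v.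
Proof. by apply: sumr_ge0 => i _; rewrite -expr2 sqr_ge0. Qed.

Lemma dot_eq0 v : dot v v = 0 -> v = 0.
Proof.
move=> /eqP; rewrite psumr_eq0; last by move=> i _; rewrite -expr2 sqr_ge0.
move=> /allP H; apply/matrixP => i j; rewrite (ord1 i) mxE.
have /implyP := H j (mem_index_enum j); rewrite -expr2 sqrf_eq0.
by move=> /(_ isT)/eqP.
Qed.

Lemma enormE v : enorm v = Num.sqrt (dot v v).
Proof. by rewrite /enorm /dot; congr Num.sqrt; apply: eq_bigr => i _; rewrite expr2. Qed.

Lemma enorm_ge0 v : 0 <= enorm v.
Proof. exact: sqrtr_ge0. Qed.

Lemma enorm_sq v : enorm v ^+ 2 = dot v v.
Proof. by rewrite enormE sqr_sqrtr // dot_ge0. Qed.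

Lemma enorm_eq0 v : enorm v = 0 -> v = 0.
Proof.
move=> H; apply: dot_eq0; rewrite -enorm_sq H; by rewrite expr0n.
Qed.

Lemma enorm0 : enorm (0 : 'rV[R]_n) = 0.
Proof. by rewrite enormE dot0r sqrtr0. Qed.

Lemma enormZ a v : enorm (a *: v) = `|a| * enorm v.
Proof.
rewrite !enormE dotZl dotZr mulrA -expr2 sqrtrM ?sqr_ge0 //.
by rewrite sqrtr_sqr.
Qed.

Lemma enormN v : enorm (- v) = enorm v.
Proof. by rewrite -scaleN1r enormZ normrN normr1 mul1r. Qed.

Lemma enormB u v : enorm (u - v) = enorm (v - u).
Proof. by rewrite -enormN opprB. Qed.

Lemma CS_aux u v : dot u v <= enorm u * enorm v.
Proof.
set A := enorm u; set B := enorm v.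
have A0 := enorm_ge0 u; have B0 := enorm_ge0 v.
have [Az|Ap] := eqVneq A 0.
  by rewrite (enorm_eq0 Az) dotC dot0r Az mul0r.
have [Bz|Bp] := eqVneq B 0.
  by rewrite (enorm_eq0 Bz) dot0r Bz mulr0.
have H := dot_ge0 (B *: u - A *: v).
rewrite !(dotBl, dotBr, dotZl, dotZr) -!enorm_sq -/A -/B (dotC v u) in H.
have AB : 0 < A * B by rewrite mulr_gt0 // lt0r ?Ap ?Bp.
have : 0 <= (A * B) * (2 * (A * B - dot u v)).
  by move: H; set d := dot u v => H; lra.
rewrite pmulr_rge0 //; lra.
Qed.

Lemma CS u v : `|dot u v| <= enorm u * enorm v.
Proof.
rewrite ler_norml CS_aux andbT.
have := CS_aux (- u) v; rewrite dotNl enormN; lra.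
Qed.

Lemma enormD u v : enorm (u + v) <= enorm u + enorm v.
Proof.
have H0 : 0 <= enorm u + enorm v by rewrite addr_ge0 // enorm_ge0.
rewrite -(ger0_norm H0) -sqrtr_sqr enormE ler_sqrt ?sqr_ge0 //.
rewrite !(dotDl, dotDr) (dotC v u) -!enorm_sq.
have := CS_aux u v; lra.
Qed.

Lemma coord_le v i : `|v ord0 i| <= enorm v.
Proof.
rewrite -sqrtr_sqr /enorm ler_sqrt; last by apply: sumr_ge0 => j _; rewrite sqr_ge0.
rewrite (bigD1 i) //= lerDl; apply: sumr_ge0 => j _; exact: sqr_ge0.
Qed.

End Eucl.


Section Anal.
Variables (R : realType) (n : nat).

Lemma gradE (f : 'rV[R]_n -> R) x v : 'd f x v = dot (grad f x) v.
Proof.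
rewrite {1}(row_sum_delta v) linear_sum /dot; apply: eq_bigr => i _.
by rewrite linearZ /= mxE mulrC.
Qed.

Lemma dirder (f : 'rV[R]_n -> R) (u h : 'rV[R]_n) (t : R) : (forall x, differentiable f x) ->
  is_derive t 1 (fun s : R => f (u + s *: h)) ('d f (u + t *: h) h).
Proof.
move=> Hf.
pose g := (cst u + (fun s : R => s *: h)) : R -> 'rV[R]_n.
have gE : (fun s : R => f (u + s *: h)) = f \o g by [].
have dg : differentiable g t.
  apply: differentiableD; first exact: differentiable_cst.
  apply: differentiableZl; by [].
have dF : differentiable (f \o g) t by apply: differentiable_comp => //.
rewrite gE; apply: DeriveDef; first exact/derivable1_diffP.
rewrite deriveE // diff_comp // /=.
have Eg := @diff_val _ _ _ _ _ _ _ (is_diffD (is_diff_cst u t) (is_diff_scalel t h)).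
rewrite Eg -[X in 'd f _ X]/(0 + 1 *: h) scale1r add0r.
by rewrite -[g t]/(u + t *: h).
Qed.

Lemma mvt (f : 'rV[R]_n -> R) (u h : 'rV[R]_n) : (forall x, differentiable f x) ->
  exists2 s : R, 0 <= s <= 1 & f (u + h) - f u = dot (grad f (u + s *: h)) h.
Proof.
move=> Hf.
have Fc : {within `[0, 1], continuous (fun s : R => f (u + s *: h))}.
  apply: continuous_subspaceT => x.
  apply: differentiable_continuous.
  pose g := (cst u + (fun s : R => s *: h)) : R -> 'rV[R]_n.
  have -> : (fun s : R => f (u + s *: h)) = f \o g by [].
  apply: differentiable_comp; last exact: Hf.
  apply: differentiableD; first exact: differentiable_cst.
  apply: differentiableZl; by [].
have [c c01 E] := @MVT_segment R (fun s : R => f (u + s *: h))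
  (fun s => 'd f (u + s *: h) h) 0 1 ler01
  (fun x _ => dirder u h x Hf) Fc.
exists c; first by move: c01; rewrite in_itv.
by move: E; rewrite scale1r scale0r addr0 subr0 mulr1 gradE.
Qed.

End Anal.


Section Comp.
Variables (R : realType) (n : nat).

Lemma enorm_cont (x0 : 'rV[R]_n) : continuous (fun x : 'rV[R]_n => enorm (x - x0)).
Proof.
move=> x.
apply: (@continuous_comp _ _ _ (fun x : 'rV[R]_n => \sum_(i < n) ((x - x0) ord0 i) ^+ 2)
   (@Num.sqrt R)).
  apply: continuous_big; first exact: add_continuous.
  move=> i _ y.
  apply: (@continuous_comp _ _ _ (fun x : 'rV[R]_n => (x - x0) ord0 i) (fun z : R => z ^+ 2)).
    apply: (@continuous_comp _ _ _ (fun x : 'rV[R]_n => x - x0) (fun M : 'rV[R]_n => M ord0 i)).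
      by apply: continuousB; [exact: cvg_id | exact: cst_continuous].
    exact: coord_continuous.
  exact: exprn_continuous.
exact: sqrt_continuous.
Qed.

Lemma ball_min (J : 'rV[R]_n -> R) (x0 : 'rV[R]_n) (r : R) : 0 <= r ->
  (forall x, differentiable J x) ->
  exists2 u, eball x0 r u & forall x, eball x0 r x -> J u <= J x.
Proof.
move=> r0 HJ.
have cl : closed (eball x0 r).
  have H := proj1 (continuous_closedP _) (@enorm_cont x0) _ (@closed_le R r).
  exact: H.
have cb : compact [set v : 'rV[R]_n |
    forall i, `[x0 ord0 i - r, x0 ord0 i + r]%classic (v ord0 i)].
  apply: (@rV_compact _ _ (fun i => `[x0 ord0 i - r, x0 ord0 i + r]%classic)) => i.
  exact: segment_compact.
have cp : compact (eball x0 r).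
  apply: subclosed_compact cl cb _.
  move=> x Hx i /=; rewrite in_itv /= -ler_distl.
  have := coord_le (x - x0) i; rewrite !mxE => H; exact: le_trans H Hx.
have ne : eball x0 r !=set0 by exists x0; rewrite /eball /= subrr enorm0.
have Jc : {within eball x0 r, continuous J}.
  apply: continuous_subspaceT => x; exact: differentiable_continuous.
have [u uA umin] := compact_EVT_min ne cp Jc.
exists u; first by rewrite inE in uA.
by move=> x Hx; apply: umin; rewrite inE.
Qed.

End Comp.


Section Help.
Variables (R : realType) (n : nat).
Local Notation N := (@enorm R n).

Lemma small_ge0 (c M T : R) : 0 < T -> 0 <= M ->
  (forall t, 0 < t -> t <= T -> - (M * t) <= c) -> 0 <= c.
Proof.
move=> T0 M0 H; rewrite leNgt; apply/negP => c0.
pose s := - c / (2 * (M + 1)).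
have D0 : 0 < 2 * (M + 1) by lra.
have s0 : 0 < s by rewrite /s divr_gt0 //; lra.
have sE : s * (2 * (M + 1)) = - c by rewrite /s divfK // lt0r_neq0.
pose t := Num.min T s.
have t0 : 0 < t by rewrite lt_min T0 s0.
have tT : t <= T by rewrite ge_min lexx.
have ts : t <= s by rewrite ge_min lexx orbT.
have := H t t0 tT.
have : M * t <= M * s by rewrite ler_wpM2l.
lra.
Qed.

Lemma lipdot (G : 'rV[R]_n -> 'rV[R]_n) (c : 'rV[R]_n) (L e : R)
  (HL : forall y z, N (y - c) <= e -> N (z - c) <= e ->
      N (G y - G z) <= L * N (y - z)) y z h :
  N (y - c) <= e -> N (z - c) <= e ->
  `|dot (G y - G z) h| <= `|L| * N (y - z) * N h.
Proof.
move=> Hy Hz; apply: le_trans (CS _ _) _.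
apply: ler_wpM2r; first exact: enorm_ge0.
apply: le_trans (HL _ _ Hy Hz) _.
apply: ler_wpM2r; first exact: enorm_ge0.
exact: ler_norm.
Qed.

Lemma ball_conv (c u x : 'rV[R]_n) (r s : R) :
  N (u - c) <= r -> N (x - c) <= r -> 0 <= s <= 1 ->
  N (u + s *: (x - u) - c) <= r.
Proof.
move=> Hu Hx /andP[s0 s1].
have -> : u + s *: (x - u) - c = (1 - s) *: (u - c) + s *: (x - c).
  by apply/rowP => i; rewrite !mxE; ring.
apply: le_trans (enormD _ _) _.
rewrite !enormZ (ger0_norm s0) ger0_norm; last lra.
have := enorm_ge0 (u - c); have := enorm_ge0 (x - c).
have : (1 - s) * N (u - c) <= (1 - s) * r by rewrite ler_wpM2l //; lra.
have : s * N (x - c) <= s * r by rewrite ler_wpM2l.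
lra.
Qed.

Lemma taylor (f : 'rV[R]_n -> R) (Hf : forall x, differentiable f x)
  (c : 'rV[R]_n) (L e : R)
  (HL : forall y z, N (y - c) <= e -> N (z - c) <= e ->
      N (grad f y - grad f z) <= L * N (y - z)) u x :
  N (u - c) <= e -> N (x - c) <= e ->
  `|f x - f u - dot (grad f u) (x - u)| <= `|L| * N (x - u) ^+ 2.
Proof.
move=> Hu Hx.
have [s s01 E] := mvt u (x - u) Hf.
have xE : u + (x - u) = x by apply/rowP => i; rewrite !mxE; ring.
rewrite xE in E.
have -> : f x - f u - dot (grad f u) (x - u) =
  dot (grad f (u + s *: (x - u)) - grad f u) (x - u) by rewrite dotBl E.
have Hxi := ball_conv Hu Hx s01.
apply: le_trans (lipdot HL _ Hxi Hu) _.
have -> : u + s *: (x - u) - u = s *: (x - u).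
  by apply/rowP => i; rewrite !mxE; ring.
rewrite enormZ.
move: s01 => /andP[s0 s1].
rewrite (ger0_norm s0).
have P : 0 <= `|L| * (N (x - u) ^+ 2) * (1 - s).
  apply: mulr_ge0; last lra.
  by apply: mulr_ge0; [exact: normr_ge0 | exact: sqr_ge0].
lra.
Qed.

End Help.

Section Help2.
Variables (R : realType) (n : nat).
Lemma enorm_revtri (x y : 'rV[R]_n) : enorm x - enorm (x - y) <= enorm y.
Proof.
have := enormD y (x - y).
have -> : y + (x - y) = x by apply/rowP => i; rewrite !mxE; ring.
by rewrite lerBlDr.
Qed.
End Help2.

Section Help3.
Variables (R : realType) (n : nat).
Lemma dot_expand (v w : 'rV[R]_n) (a : R) :
  dot (v + a *: w) (v + a *: w) = dot v v + 2 * a * dot w v + a ^+ 2 * enorm w ^+ 2.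
Proof.
rewrite dotDl !dotDr !dotZl !dotZr (dotC v w) enorm_sq; ring.
Qed.
End Help3.


Section Arith.
Local Set Implicit Arguments. Local Unset Strict Implicit.
Variable R : realType.
Implicit Types (a b c d r q t A B D G P X Y L LJ Lp ph Jx Ju : R).

Lemma arith1 d0 d1 X Y : 0 <= d1 -> d1 - d0 <= X -> X <= Y -> - Y <= d0.
Proof. lra. Qed.

Lemma arith_vi A B d L h t : 0 < t -> A <= B ->
  `|B - A - t * d| <= L * (t * h) ^+ 2 -> - (L * h ^+ 2 * t) <= d.
Proof.
move=> t0 AB; rewrite ler_norml => /andP[_ H].
have : 0 <= t * (d + L * h ^+ 2 * t) by lra.
rewrite pmulr_rge0 //; lra.
Qed.

Lemma sq_le b r : 0 <= b -> b <= r -> b ^+ 2 <= r ^+ 2.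
Proof. nra. Qed.

Lemma arith2 W D q c r : 0 <= q -> q * c = r -> W <= r ^+ 2 ->
  0 <= - D - q * c ^+ 2 -> W + 2 * q * D + q ^+ 2 * c ^+ 2 <= 0.
Proof.
move=> q0 qc HW HD.
have H : 2 * q * D <= 2 * q * (- q * c ^+ 2) by apply: ler_wpM2l; lra.
have : q ^+ 2 * c ^+ 2 = r ^+ 2 by rewrite -qc; ring.
lra.
Qed.

Lemma arith_delta a c r q LJ Lp : 0 <= LJ -> 0 <= Lp -> 0 < r ->
  r * (4 * (LJ + Lp + 1)) < a -> a - LJ * r <= c ->
  0 < c /\ (q * c = r -> (LJ + Lp) * (2 * q) <= 1).
Proof.
move=> LJ0 Lp0 r0 ra ac.
have c0 : 0 < c by nra.
split => // qc.
rewrite -(ler_pM2r c0) mul1r.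
have -> : (LJ + Lp) * (2 * q) * c = 2 * (LJ + Lp) * r by rewrite -qc; ring.
nra.
Qed.

Lemma arith3 P Y D q c G r : P = Y + 2 * q * D + q ^+ 2 * c ^+ 2 ->
  G = D + q * c ^+ 2 -> Y <= r ^+ 2 -> q * c = r -> P <= 2 * q * G.
Proof.
move=> -> -> HY qc.
have : q ^+ 2 * c ^+ 2 = r ^+ 2 by rewrite -qc; ring.
lra.
Qed.

Lemma arith_fin Jx Ju G P LJ Lp q ph : 0 < q -> (LJ + Lp) * (2 * q) <= 1 ->
  0 <= LJ -> 0 <= Lp -> 0 <= P -> P <= 2 * q * G ->
  `|Jx - Ju - G| <= LJ * P -> ph <= Lp * P -> Ju <= Jx - ph.
Proof.
move=> q0 S LJ0 Lp0 P0 PG; rewrite ler_norml => /andP[H _] Hph.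
have G0 : 0 <= G.
  have : 0 <= 2 * q * G by lra.
  by rewrite pmulr_rge0 //; lra.
have H1 : (LJ + Lp) * P <= (LJ + Lp) * (2 * q * G) by apply: ler_wpM2l => //; lra.
have H2 : (LJ + Lp) * (2 * q) * G <= 1 * G by apply: ler_wpM2r.
lra.
Qed.

Lemma arith_uniq a b p : a <= b - p -> b <= a -> 0 <= p -> p = 0.
Proof. lra. Qed.

End Arith.


Unset Implicit Arguments. Set Strict Implicit.

Theorem theorem1p3 (R : realType) (n : nat)
  (J : 'rV[R]_n -> R) (phi : 'rV[R]_n -> R)
  (HJ : C1 J) (HJlip : locally_lipschitz (grad J))
  (Hphi : C1 phi) (Hphilip : lipschitz_near (grad phi) 0)
  (Hphiconv : convex_fun phi)
  (Hphi0 : forall x, 0 <= phi x)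
  (Hphizero : forall x, phi x = 0 <-> x = 0)
  (x0 : 'rV[R]_n) (Hx0 : grad J x0 != 0) :
  exists2 delta : R, 0 < delta &
    forall r : R, 0 < r -> r < delta ->
      exists u : 'rV[R]_n,
        [/\ eball x0 r u,
            (forall x, eball x0 r x -> J u <= J x),
            (forall v, eball x0 r v -> (forall x, eball x0 r x -> J v <= J x) -> v = u)
          & (forall x, eball x0 r x -> J u <= J x - phi (x - u))].
Proof.
have [HJd _] := HJ; have [Hpd _] := Hphi.
have [LJ [eJ eJ0 HLJ]] := HJlip x0.
have [Lp [ep ep0 HLp]] := Hphilip.
have a0 : 0 < enorm (grad J x0).
  have := enorm_ge0 (grad J x0); rewrite le0r => /orP[/eqP H|//].
  by rewrite (enorm_eq0 H) eqxx in Hx0.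
have LJ0 := normr_ge0 LJ; have Lp0 := normr_ge0 Lp.
set K := `|LJ| + `|Lp| + 1.
have K0 : 0 < K by rewrite /K; lra.
have p00 : phi 0 = 0 by apply/Hphizero.
have gp0 : grad phi 0 = 0.
  have key : forall v, 0 <= dot (grad phi 0) v.
    move=> v.
    have Nv0 := enorm_ge0 v.
    have T0 : 0 < ep / (enorm v + 1) by rewrite divr_gt0 //; lra.
    apply: (small_ge0 (M := `|Lp| * enorm v ^+ 2) T0).
      by apply: mulr_ge0 => //; exact: sqr_ge0.
    move=> t t0 tT.
    have [s /andP[s0 s1] E] := mvt 0 (t *: v) Hpd.
    rewrite add0r p00 subr0 dotZr in E.
    have Hxi : enorm (s *: (t *: v) - 0) <= t * enorm v.
      rewrite subr0 !enormZ (ger0_norm s0) (gtr0_norm t0) mulrA.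
      have : s * t <= t by rewrite -[X in _ <= X]mul1r ler_wpM2r // ltW.
      move=> st; apply: ler_wpM2r => //.
    have tv : t * enorm v <= ep.
      move: tT; rewrite ler_pdivlMr; last lra.
      move=> H; nra.
    have H1' : `|dot (grad phi (s *: (t *: v)) - grad phi 0) v| <=
               `|Lp| * enorm (s *: (t *: v) - 0) * enorm v.
      apply: (lipdot HLp); first exact: (le_trans Hxi tv).
      by rewrite subr0 enorm0 ltW.
    have H2 : 0 <= dot (grad phi (0 + s *: (t *: v))) v.
      by rewrite -(pmulr_rge0 _ t0) -E Hphi0.
    rewrite add0r in H2.
    move: H1'; rewrite dotBl ler_norml => /andP[_ H3].
    have H4 : `|Lp| * enorm (s *: (t *: v) - 0) * enorm v <=
              `|Lp| * (t * enorm v) * enorm v.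
      by apply: ler_wpM2r => //; apply: ler_wpM2l.
    have -> : `|Lp| * enorm v ^+ 2 * t = `|Lp| * (t * enorm v) * enorm v.
      by rewrite expr2; ring.
    exact: arith1 H2 H3 H4.
  apply: dot_eq0; have := key (- grad phi 0); rewrite dotNr oppr_ge0 => H.
  by apply/le_anti; rewrite H dot_ge0.
have phib : forall h, enorm h <= ep -> phi h <= `|Lp| * enorm h ^+ 2.
  move=> h Hh.
  have [s /andP[s0 s1] E] := mvt 0 h Hpd.
  rewrite !add0r p00 subr0 in E; rewrite E.
  have Hxi : enorm (s *: h - 0) <= enorm h.
    rewrite subr0 enormZ (ger0_norm s0) -[X in _ <= X]mul1r.
    by apply: ler_wpM2r => //; exact: enorm_ge0.
  have H1 : `|dot (grad phi (s *: h) - grad phi 0) h| <=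
            `|Lp| * enorm (s *: h - 0) * enorm h.
    apply: (lipdot HLp); first exact: (le_trans Hxi Hh).
    by rewrite subr0 enorm0 ltW.
  rewrite gp0 subr0 in H1.
  apply: le_trans (ler_norm _) _; apply: le_trans H1 _.
  rewrite expr2 mulrA; apply: ler_wpM2r; first exact: enorm_ge0.
  apply: ler_wpM2l => //; by rewrite subr0 in Hxi.
pose delta := Num.min eJ (Num.min (ep / 2) (enorm (grad J x0) / (4 * K))).
have two0 : (0 : R) < 2 by rewrite ltr0n.
have K4 : 0 < 4 * K by rewrite mulr_gt0 // ltr0n.
exists delta.
  by rewrite !lt_min eJ0 /= !divr_gt0.
move=> r r0 rd.
move: rd; rewrite !lt_min => /andP[rJ /andP[rp rK]].
rewrite ltr_pdivlMr // in rp; rewrite ltr_pdivlMr // in rK.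
have [u uB umin] := ball_min x0 (ltW r0) HJd.
exists u.
have inJ : forall x, eball x0 r x -> enorm (x - x0) <= eJ.
  by move=> x H; exact: le_trans H (ltW rJ).
have x0J : enorm (x0 - x0) <= eJ by rewrite subrr enorm0 ltW.
have gg0 : enorm (grad J x0 - grad J u) <= `|LJ| * r.
  rewrite enormB.
  apply: le_trans (HLJ _ _ (inJ _ uB) x0J) _.
  apply: le_trans (ler_wpM2r (enorm_ge0 _) (ler_norm LJ)) _.
  exact: ler_wpM2l.
have cge : enorm (grad J x0) - `|LJ| * r <= enorm (grad J u).
  apply: le_trans (enorm_revtri (grad J x0) (grad J u)).
  by rewrite lerD2l lerN2.
have c0 : 0 < enorm (grad J u).
  by have [] := arith_delta 0 LJ0 Lp0 r0 rK cge.
have qc : r / enorm (grad J u) * enorm (grad J u) = r.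
  by rewrite divfK // lt0r_neq0.
have [_ S] := arith_delta (r / enorm (grad J u)) LJ0 Lp0 r0 rK cge.
have {}S := S qc.
have q0 : 0 < (r / enorm (grad J u)) by rewrite divr_gt0.
have VI : forall x, eball x0 r x -> 0 <= dot (grad J u) (x - u).
  move=> x xB.
  have M0 : 0 <= `|LJ| * enorm (x - u) ^+ 2 by rewrite mulr_ge0 // sqr_ge0.
  apply: (small_ge0 ltr01 M0) => t t0 t1.
  have t01 : 0 <= t <= 1 by rewrite (ltW t0) t1.
  have xtB := ball_conv uB xB t01.
  have Jle := umin _ xtB.
  have Tay := taylor HJd HLJ (inJ _ uB) (inJ _ xtB).
  have E : u + t *: (x - u) - u = t *: (x - u).
    by apply/rowP => i; rewrite !mxE; ring.
  rewrite E dotZr enormZ (gtr0_norm t0) in Tay.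
  exact: arith_vi t0 Jle Tay.
pose xs := x0 - (r / enorm (grad J u)) *: (grad J u).
have xsB : eball x0 r xs.
  rewrite /eball /xs /=.
  have -> : x0 - (r / enorm (grad J u)) *: (grad J u) - x0 = - ((r / enorm (grad J u)) *: (grad J u)).
    by apply/rowP => i; rewrite !mxE; ring.
  by rewrite enormN enormZ (gtr0_norm q0) qc.
have VIs := VI _ xsB.
have E1 : xs - u = - (u - x0) - (r / enorm (grad J u)) *: (grad J u).
  by apply/rowP => i; rewrite !mxE; ring.
rewrite E1 dotBr dotNr dotZr -enorm_sq in VIs.
have wdot : dot (u - x0) (u - x0) <= r ^+ 2.
  by rewrite -enorm_sq; apply: sq_le => //; exact: enorm_ge0.
have E2 : dot (u - x0 + (r / enorm (grad J u)) *: (grad J u)) (u - x0 + (r / enorm (grad J u)) *: (grad J u)) =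
   dot (u - x0) (u - x0) + 2 * (r / enorm (grad J u)) * dot (grad J u) (u - x0) + (r / enorm (grad J u)) ^+ 2 * (enorm (grad J u)) ^+ 2.
  exact: dot_expand.
have wz : u - x0 + (r / enorm (grad J u)) *: (grad J u) = 0.
  apply: dot_eq0; apply/le_anti; rewrite dot_ge0 andbT E2.
  exact: arith2 (ltW q0) qc wdot VIs.
have main : forall x, eball x0 r x -> J u <= J x - phi (x - u).
  move=> x xB.
  have hE : x - u = (x - x0) + (r / enorm (grad J u)) *: (grad J u).
    have -> : (x - x0) + (r / enorm (grad J u)) *: (grad J u) =
      (x - x0) - (u - x0) + (u - x0 + (r / enorm (grad J u)) *: (grad J u)).
      by apply/rowP => i; rewrite !mxE; ring.
    by rewrite wz addr0; apply/rowP => i; rewrite !mxE; ring.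
  have ydot : dot (x - x0) (x - x0) <= r ^+ 2.
    by rewrite -enorm_sq; apply: sq_le => //; exact: enorm_ge0.
  have EP : enorm (x - u) ^+ 2 = dot (x - x0) (x - x0) + 2 * (r / enorm (grad J u)) * dot (grad J u) (x - x0)
      + (r / enorm (grad J u)) ^+ 2 * (enorm (grad J u)) ^+ 2.
    by rewrite enorm_sq hE dot_expand.
  have EG : dot (grad J u) (x - u) = dot (grad J u) (x - x0) + (r / enorm (grad J u)) * (enorm (grad J u)) ^+ 2.
    by rewrite hE dotDr dotZr -enorm_sq.
  have PG := arith3 EP EG ydot qc.
  have Tay := taylor HJd HLJ (inJ _ uB) (inJ _ xB).
  have hb : enorm (x - u) <= ep.
    have -> : x - u = (x - x0) + (x0 - u) by apply/rowP => i; rewrite !mxE; ring.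
    apply: le_trans (enormD _ _) _.
    rewrite (enormB x0 u).
    have : enorm (x - x0) + enorm (u - x0) <= r + r by apply: lerD.
    move=> H; apply: le_trans H _.
    by apply: ltW; move: rp; rewrite mulr_natr mulr2n.
  have Ph := phib _ hb.
  exact: arith_fin q0 S LJ0 Lp0 (sqr_ge0 _) PG Tay Ph.
split => //.
- move=> v vB vmin.
  have H := arith_uniq (main v vB) (vmin u uB) (Hphi0 _).
  by apply: subr0_eq; apply/Hphizero.
Qed.
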